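(* Let $G$ be a locally compact, Hausdorff, étale groupoid and $\alpha$ an automorphism of $G$. Suppose that $G$ is ample and that $\mathcal{B}$ is a basis for the topology on $G^{(0)}$ consisting of compact open bisections such that for every $V \in \mathcal{B}$ there exists an integer $l \ge 1$ with $\alpha^{-l}(V)\subseteq V$. Then $G^\infty_\alpha$ is locally contracting.
   Context: Let $E$ be the directed graph with one vertex $v$ and countably infinitely many edges $e_1,e_2,\dots$. Let $E^*$ be its finite paths (including $v$), $E^\infty$ its infinite paths, $P = E^*\sqcup E^\infty$, $|\mu|$ the length. $H_\infty$ is the groupoid $\{(\alpha x, |\alpha|-|\beta|, \beta x) : x\in P, \alpha,\beta\in E^*\}\subseteq P\times\mathbb{Z}\times P$ with $(x,m,y)(y,n,z)=(x,m+n,z)$, $(x,m,y)^{-1}=(y,-m,x)$, unit space identified with $P$, topology generated by the sets $Z((\alpha,\beta)\setminus F)=\{(\alpha x,|\alpha|-|\beta|,\beta x): x\in P, x\text{ does not begin with an edge in }F\}$ ($F$ finite); $c(x,m,y)=m$. An automorphism is a structure-preserving homeomorphism. $G^\infty_\alpha$ is $H_\infty\times G$ with product topology, unit space $H_\infty^{(0)}\times G^{(0)}$, $r(h,g)=(r(h),r(g))$, $s(h,g)=(s(h),\alpha^{c(h)}(s(g)))$, product $(h_1,g_1)(h_2,g_2)=(h_1h_2,g_1\alpha^{-c(h_1)}(g_2))$, inverse $(h,g)^{-1}=(h^{-1},\alpha^{c(h)}(g^{-1}))$. A groupoid is ample if it has a basis of compact open bisections. An ample groupoid $L$ is locally contracting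 if for every nonempty open $W\subseteq L^{(0)}$ there is a compact open bisection $B$ with $r(B)\subsetneq s(B)\subseteq W$. *)

(* Defs.v *)
From HB Require Import structures.
From mathcomp Require Import all_boot all_order all_algebra.
From mathcomp Require Import all_classical all_reals all_analysis.
Set Implicit Arguments. Unset Strict Implicit. Unset Printing Implicit Defensive.
Import Order.TTheory GRing.Theory Num.Theory.
Local Open Scope classical_set_scope.

(** Paths of the graph E (one vertex, edges indexed by nat). *)
Definition path_P : Type := (seq nat + (nat -> nat))%type.

Definition pcat (a : seq nat) (x : path_P) : path_P :=
  match x with
  | inl s => inl (a ++ s)
  | inr f => inr (fun n => if (n < size a)%N then nth 0%N a n else f (n - size a)%N)
  end.

Definition begins_in (F : seq nat) (x : path_P) : Prop :=
  match x with
  | inl [::] => False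
  | inl (e :: _) => e \in F
  | inr f => f 0%N \in F
  end.

Definition Hamb : Type := (path_P * int * path_P)%type.
HB.instance Definition _ := Choice.on Hamb.

Definition Zset (i : (seq nat * seq nat) * seq nat) : set Hamb :=
  [set t | exists x : path_P, ~ begins_in i.2 x /\
     t = (pcat i.1.1 x, ((size i.1.1)%:Z - (size i.1.2)%:Z)%R, pcat i.1.2 x)].

Definition Zidx : Type := ((seq nat * seq nat) * seq nat)%type.
HB.instance Definition _ := Choice.on Zidx.
HB.instance Definition _ := isPointed.Build Zidx (([::], [::]), [::]).

HB.instance Definition _ :=
  @isSubBaseTopological.Build Hamb Zidx setT Zset.


Record gpd (T : Type) := Gpd {
  arr : set T;
  rg : T -> T;
  sc : T -> T;
  mul : T -> T -> T;
  inv : T -> T }.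

Definition units T (G : gpd T) : set T := rg G @` arr G.

Definition is_groupoid T (G : gpd T) : Prop :=
  (forall g, arr G g ->
     [/\ arr G (rg G g), arr G (sc G g) & arr G (inv G g)]) /\
  (forall g, arr G g ->
     [/\ rg G (rg G g) = rg G g, sc G (rg G g) = rg G g,
         rg G (sc G g) = sc G g & sc G (sc G g) = sc G g]) /\
  (forall g, arr G g ->
     rg G (inv G g) = sc G g /\ sc G (inv G g) = rg G g) /\
  (forall g, arr G g ->
     [/\ mul G (rg G g) g = g, mul G g (sc G g) = g,
         mul G g (inv G g) = rg G g & mul G (inv G g) g = sc G g]) /\
  (forall g h, arr G g -> arr G h -> sc G g = rg G h ->
     [/\ arr G (mul G g h), rg G (mul G g h) = rg G g & sc G (mul G g h) = sc G h]) /\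
  (forall g h k, arr G g -> arr G h -> arr G k -> sc G g = rg G h -> sc G h = rg G k ->
     mul G (mul G g h) k = mul G g (mul G h k)).

Definition open_in (T : topologicalType) (A W : set T) : Prop :=
  exists O, open O /\ W = O `&` A.

Definition hausdorff_in (T : topologicalType) (A : set T) : Prop :=
  forall x y, A x -> A y -> x <> y ->
    exists U V, [/\ open U, open V, U x, V y & U `&` V = set0].

Definition locally_compact_in (T : topologicalType) (A : set T) : Prop :=
  forall x, A x -> exists K O, [/\ compact K, K `<=` A, open O, O x & O `&` A `<=` K].

Definition composable T (G : gpd T) : set (T * T) :=
  [set p | [/\ arr G p.1, arr G p.2 & sc G p.1 = rg G p.2]].

Definition is_topological_groupoid (T : topologicalType) (G : gpd T) : Prop :=
  is_groupoid G /\
  {within arr G, continuous (inv G)} /\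
  {within composable G, continuous (fun p => mul G p.1 p.2)}.

(** étale: the range map is a local homeomorphism from G onto G^(0) *)
Definition etale (T : topologicalType) (G : gpd T) : Prop :=
  forall g, arr G g -> exists U, [/\ open U, U g,
    (forall x y, (U `&` arr G) x -> (U `&` arr G) y -> rg G x = rg G y -> x = y),
    {within U `&` arr G, continuous (rg G)} &
    (forall O, open O -> open_in (units G) (rg G @` (O `&` U `&` arr G)))].

Definition lch_etale_groupoid (T : topologicalType) (G : gpd T) : Prop :=
  [/\ is_topological_groupoid G, locally_compact_in (arr G),
      hausdorff_in (arr G) & etale G].

Definition bisection T (G : gpd T) (B : set T) : Prop :=
  B `<=` arr G /\
  (forall x y, B x -> B y -> rg G x = rg G y -> x = y) /\
  (forall x y, B x -> B y -> sc G x = sc G y -> x = y).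

Definition compact_open_bisection (T : topologicalType) (G : gpd T) (B : set T) : Prop :=
  [/\ compact B, open_in (arr G) B & bisection G B].

Definition ample (T : topologicalType) (G : gpd T) : Prop :=
  forall O g, open O -> arr G g -> O g ->
    exists B, [/\ compact_open_bisection G B, B g & B `<=` O].

Definition locally_contracting (T : topologicalType) (G : gpd T) : Prop :=
  forall W, open_in (units G) W -> W !=set0 ->
    exists B, [/\ compact_open_bisection G B,
                  rg G @` B `<` sc G @` B & sc G @` B `<=` W].

Definition zpow T (a ai : T -> T) (z : int) : T -> T :=
  match z with
  | Posz n => iter n a
  | Negz n => iter n.+1 ai
  end.

Definition automorphism (T : topologicalType) (G : gpd T) (a ai : T -> T) : Prop :=
  [/\ (forall g, arr G g -> [/\ arr G (a g), arr G (ai g), ai (a g) = g & a (ai g) = g]),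
      {within arr G, continuous a}, {within arr G, continuous ai},
      (forall g, arr G g -> [/\ rg G (a g) = a (rg G g), sc G (a g) = a (sc G g)
                              & inv G (a g) = a (inv G g)]) &
      (forall g h, arr G g -> arr G h -> sc G g = rg G h ->
         sc G (a g) = rg G (a h) /\ a (mul G g h) = mul G (a g) (a h))].

Definition Hset : set Hamb :=
  [set t | exists (a b : seq nat) (x : path_P),
     t = (pcat a x, ((size a)%:Z - (size b)%:Z)%R, pcat b x)].

Definition Hinf : gpd Hamb :=
  {| arr := Hset;
     rg := fun t => (t.1.1, 0%R, t.1.1);
     sc := fun t => (t.2, 0%R, t.2);
     mul := fun t u => (t.1.1, (t.1.2 + u.1.2)%R, u.2);
     inv := fun t => (t.2, (- t.1.2)%R, t.1.1) |}.

Definition cocycle (t : Hamb) : int := t.1.2.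

Definition Ginf (T : topologicalType) (G : gpd T) (a ai : T -> T) : gpd (Hamb * T) :=
  {| arr := Hset `*` arr G;
     rg := fun p => (rg Hinf p.1, rg G p.2);
     sc := fun p => (sc Hinf p.1, zpow a ai (cocycle p.1) (sc G p.2));
     mul := fun p q => (mul Hinf p.1 q.1,
                        mul G p.2 (zpow a ai (- cocycle p.1)%R q.2));
     inv := fun p => (inv Hinf p.1, zpow a ai (cocycle p.1) (inv G p.2)) |}.

(* Main.v *)
Require Import Defs.
From HB Require Import structures.
From mathcomp Require Import all_boot all_order all_algebra finmap.
From mathcomp Require Import all_classical all_reals all_analysis.
From mathcomp Require Import zify.
Set Implicit Arguments. Unset Strict Implicit. Unset Printing Implicit Defensive.
Local Open Scope classical_set_scope.

Lemma pcat_nil x : pcat [::] x = x.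
Proof.
case: x => [s|f] //=. congr inr; apply: funext => n. by rewrite subn0.
Qed.

Lemma pcat_cat a b x : pcat (a ++ b) x = pcat a (pcat b x).
Proof.
case: x => [s|f] /=; first by rewrite catA.
congr inr; apply: funext => n; rewrite size_cat nth_cat.
case: (ltnP n (size a)) => Hn.
  by have -> : n < size a + size b by lia.
case: (ltnP (n - size a) (size b)) => Hm.
  by have -> : n < size a + size b by lia.
have -> : (n < size a + size b) = false by lia.
congr f; lia.
Qed.

Lemma pcat_inj a x y : pcat a x = pcat a y -> x = y.
Proof.
case: x => [s|f]; case: y => [t|g] //=.
  move=> [] /(congr1 (drop (size a))). by rewrite !drop_size_cat // => ->.
move=> [] H.
congr inr; apply: funext => n.
move: (congr1 (fun h => h (n + size a)) H) => /=; rewrite ltnNge leq_addl /= addnK. done.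
Qed.

Lemma pcat_prefix a b x y : pcat a x = pcat b y -> size a <= size b ->
  exists c, b = a ++ c /\ x = pcat c y.
Proof.
case: x => [s|f]; case: y => [t|g] //= E Hs.
  case: E => E.
  have Ha : a = take (size a) b.
    by move: (congr1 (take (size a)) E); rewrite take_size_cat // takel_cat.
  have Hb : b = a ++ drop (size a) b by rewrite {1}Ha cat_take_drop.
  exists (drop (size a) b); split=> //.
  move: E; rewrite {1}Hb -catA.
  by move/(congr1 (drop (size a))); rewrite !drop_size_cat // => ->.
case: E => E.
have Ha : a = take (size a) b.
  apply: (@eq_from_nth _ 0); first by rewrite size_takel.
  move=> i Hi; rewrite nth_take //.
  move: (congr1 (fun h => h i) E) => /=.
  rewrite Hi. have -> : i < size b by lia. done.
exists (drop (size a) b); split; first by rewrite {1}Ha cat_take_drop.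
congr inr; apply: funext => n.
move: (congr1 (fun h => h (n + size a)) E) => /=.
rewrite ltnNge leq_addl /= addnK size_drop nth_drop => ->.
case: (ltnP (n + size a) (size b)) => Hn.
  have -> : n < size b - size a by lia. congr nth; lia.
have -> : (n < size b - size a) = false by lia.
congr g; lia.
Qed.

Lemma pcat_same a b x y : pcat a x = pcat b y -> size a = size b -> a = b /\ x = y.
Proof.
move=> E Hs; have [c [Hb Hx]] := pcat_prefix E (eq_leq Hs).
have c0 : c = [::].
  have H2 : size b = size a + size c by rewrite Hb size_cat.
  apply: size0nil; lia.
by move: Hb Hx; rewrite c0 cats0 pcat_nil.
Qed.

Lemma begins_cons F e c x : begins_in F (pcat (e :: c) x) <-> e \in F.
Proof. by case: x. Qed.

Lemma begins_nil x : ~ begins_in [::] x.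
Proof. by case: x => [[|]|]. Qed.

Lemma begins_cat F1 F2 x : begins_in (F1 ++ F2) x <-> begins_in F1 x \/ begins_in F2 x.
Proof.
case: x => [[|e s]|f] /=; rewrite ?mem_cat; try by split=> // -[].
  by split=> [/orP|[]->]; rewrite ?orbT.
by split=> [/orP|[]->]; rewrite ?orbT.
Qed.

Lemma begins_dec F z : begins_in F z -> exists e z', e \in F /\ z = pcat [:: e] z'.
Proof.
case: z => [[|e s]|f] //= H.
  by exists e, (inl s).
exists (f 0), (inr (fun n => f n.+1)); split=> //.
congr inr; apply: funext => -[|n] //=. by rewrite subn1.
Qed.

Lemma notin_sumn F n : sumn F < n -> n \notin F.
Proof.
elim: F => [|x F IH] //= H. rewrite in_cons negb_or; apply/andP; split.
  apply/eqP; lia.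
apply: IH; lia.
Qed.

Lemma bigcap_seq_ind (t : Hamb) (P : set Hamb -> Prop) :
  (forall A B, A `<=` B -> P A -> P B) -> P setT ->
  (forall A B, P A -> P B -> P (A `&` B)) ->
  (forall i, Zset i t -> P (Zset i)) ->
  forall s : seq Zidx, (forall i, i \in s -> Zset i t) ->
    P (\bigcap_(i in [set` s]) Zset i).
Proof.
move=> mono PT PI PZ; elim=> [|j s IH] Hs.
  apply: mono PT => x _ i /=; by rewrite in_nil.
have -> : \bigcap_(i in [set` (j :: s)]) Zset i =
   Zset j `&` \bigcap_(i in [set` s]) Zset i.
  apply/seteqP; split=> x.
    move=> H; split; first by apply: H; rewrite /= in_cons eqxx.
    by move=> i /= Hi; apply: H; rewrite /= in_cons Hi orbT.
  move=> [H1 H2] i /=; rewrite in_cons => /orP [/eqP ->|Hi] //.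
  exact: H2.
apply: PI; first by apply: PZ; apply: Hs; rewrite in_cons eqxx.
by apply: IH => i Hi; apply: Hs; rewrite in_cons Hi orbT.
Qed.

Lemma nbhs_Hamb_ind (t : Hamb) (P : set Hamb -> Prop) :
  (forall A B, A `<=` B -> P A -> P B) -> P setT ->
  (forall A B, P A -> P B -> P (A `&` B)) ->
  (forall i, Zset i t -> P (Zset i)) ->
  forall A, nbhs t A -> P A.
Proof.
move=> mono PT PI PZ A; rewrite nbhsE => -[B [oB Bt] BA].
apply: (mono B) => //.
case: oB => D' sD' eB.
subst B.
case: Bt => C D'C Ct.
apply: (mono C) => [x Cx|]; first by exists C.
have [Df _ eC] := sD' _ D'C.
rewrite -eC in Ct *.
apply: (bigcap_seq_ind mono PT PI PZ (s := (Df : seq Zidx))).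
by move=> i Hi; apply: Ct.
Qed.

Lemma open_Zset i : open (Zset i).
Proof.
exists [set Zset i]; last by rewrite bigcup_set1.
move=> _ ->; exists [fset i]%fset; first by move=> j _; apply/mem_set.
apply/funext => x; apply/propext; split.
  by move=> H; apply: H; rewrite /= inE.
by move=> H j; rewrite /= inE => /eqP ->.
Qed.

Lemma open_setX' (U V : topologicalType) (A : set U) (B : set V) :
  open A -> open B -> open (A `*` B).
Proof.
rewrite !openE => oA oB [x y] [/= Ax By].
exists (A, B); first by split; [exact: oA | exact: oB].
done.
Qed.

Lemma preim_open_in (U V : topologicalType) (f : U -> V) (A : set U) (O : set V) :
  {within A, continuous f} -> open O -> open_in A (f @^-1` O `&` A).
Proof.
move=> /continuousP H oO.
have /open_subspaceP [W oW e] := H O oO.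
by exists W; split.
Qed.

Definition phi (al be : seq nat) (x : path_P) : Hamb :=
  (pcat al x, ((size al)%:Z - (size be)%:Z)%R, pcat be x).

Definition Acyl al be F (g : seq nat) : set Hamb :=
  [set t | exists x, ~ begins_in F x /\ (exists z, x = pcat g z) /\ t = phi al be x].

Definition Tgt al be F (p : seq nat) (H : seq nat) : set Hamb :=
  [set t | exists x, ~ begins_in F x /\ (exists z, ~ begins_in H z /\ x = pcat p z)
                     /\ t = phi al be x].

Definition okU (U : set_system Hamb) al be F g := U (Acyl al be F g).

Definition stepU U al be F (g : seq nat) : seq nat :=
  match pselect (exists e, okU U al be F (rcons g e)) with
  | left H => rcons g (projT1 (cid H))
  | right _ => g
  end.

Definition gamU U al be F n := iter n (stepU U al be F) [::].

Lemma stepA U al be F g : ~ (exists e, okU U al be F (rcons g e)) -> stepU U al be F g = g.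
Proof. by rewrite /stepU; case: pselect. Qed.

Lemma stepB U al be F g : (exists e, okU U al be F (rcons g e)) ->
  exists e, stepU U al be F g = rcons g e /\ okU U al be F (rcons g e).
Proof.
rewrite /stepU; case: pselect => // H _.
by exists (projT1 (cid H)); split=> //; case: (cid H).
Qed.

Lemma ok_gam U al be F : okU U al be F [::] -> forall n, okU U al be F (gamU U al be F n).
Proof.
move=> H0; elim=> [|n IH] //=.
have [Hn|Hn] := pselect (exists e, okU U al be F (rcons (gamU U al be F n) e)).
  by have [e [-> ?]] := stepB Hn.
by rewrite stepA.
Qed.

Lemma gam_mkseq U al be F :
  (forall n, exists e, okU U al be F (rcons (gamU U al be F n) e)) ->
  forall n, gamU U al be F n = mkseq (fun k => nth 0 (gamU U al be F k.+1) k) n.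
Proof.
move=> HB; elim=> [|n IH] //.
have [e [E _]] := stepB (HB n).
have E' : gamU U al be F n.+1 = rcons (gamU U al be F n) e by rewrite /= -E.
rewrite mkseqS -IH E'; congr rcons.
by rewrite nth_rcons IH size_mkseq ltnn eqxx.
Qed.

Lemma claim1 al be c d G L : Zset ((c, d), G) (phi al be L) ->
  exists p H, (exists y', ~ begins_in H y' /\ L = pcat p y') /\
    (forall z, ~ begins_in H z -> Zset ((c, d), G) (phi al be (pcat p z))).
Proof.
move=> [y [Gy E]]; rewrite /phi /= in E; case: E => E1 Ek E2.
have Hn : (size al + size d = size c + size be)%N by lia.
case: (leqP (size c) (size al)) => Hca.
  have [c1 [Hal Hy]] := pcat_prefix (esym E1) Hca.
  have [d1 [Hbe Hy']] := pcat_prefix (esym E2) (ltac:(lia) : size d <= size be).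
  have [Hcd _] : c1 = d1 /\ L = L.
    apply: pcat_same; first by rewrite -Hy -Hy'.
    move: Hn; rewrite Hal Hbe !size_cat; lia.
  subst d1.
  exists [::], (if c1 is [::] then G else [::]); split.
    exists L; split; last by rewrite pcat_nil.
    case: c1 {Hal Hbe} Hy Hy' => [|e c1] Hy _; last exact: begins_nil.
    by rewrite pcat_nil in Hy; rewrite -Hy.
  move=> z Hz; rewrite pcat_nil; exists (pcat c1 z); split.
    case: c1 {Hal Hbe} Hy Hy' Hz => [|e c1] Hy _ Hz.
      by rewrite pcat_nil.
    rewrite begins_cons => eG; apply: Gy; rewrite Hy; exact/begins_cons.
  by rewrite /phi /= Ek Hal Hbe !pcat_cat.
have [c2 [Hc HL]] := pcat_prefix E1 (ltnW Hca).
have [d2 [Hd HL']] := pcat_prefix E2 (ltac:(lia) : size be <= size d).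
have [Hcd _] : c2 = d2 /\ y = y.
  apply: pcat_same; first by rewrite -HL -HL'.
  move: Hn; rewrite Hc Hd !size_cat; lia.
subst d2.
exists c2, G; split; first by exists y.
move=> z Hz; exists z; split=> //.
by rewrite /phi /= Ek Hc Hd !pcat_cat.
Qed.

Lemma claim2A U al be F g p H y' : UltraFilter U -> okU U al be F g ->
  ~ (exists e, okU U al be F (rcons g e)) -> ~ begins_in H y' -> inl g = pcat p y' ->
  U (Tgt al be F p H).
Proof.
move=> UU okg Hnot; case: y' => [r|f] Hy //= [Eg].
case: r Hy Eg => [|e r] Hy Eg.
  have Hs : forall s : seq nat, U [set t | Acyl al be F g t /\
                       forall e, e \in s -> ~ Acyl al be F (rcons g e) t].
    elim=> [|e s IH]; first by apply: filterS okg => t At; split.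
    have Hc : U (~` Acyl al be F (rcons g e)).
      case: (in_ultra_setVsetC (Acyl al be F (rcons g e)) UU) => // H'.
      by exfalso; apply: Hnot; exists e.
    apply: filterS (filterI IH Hc) => t [[At Hs] Hn]; split=> // e'.
    by rewrite in_cons => /orP [/eqP ->|]; [done|exact: Hs].
  apply: filterS (Hs H) => t [[x [Fx [[z Ez] Et]]] Hn].
  exists x; split=> //; split=> //; exists z; split; last by rewrite Ez Eg cats0.
  move=> Bz; have [e [z' [eH Ez']]] := begins_dec Bz.
  apply: (Hn e eH); exists x; split=> //; split=> //.
  by exists z'; rewrite Ez Ez' -pcat_cat cats1.
apply: filterS okg => t [x [Fx [[z Ez] Et]]].
exists x; split=> //; split=> //; exists (pcat (e :: r) z); split.
  by rewrite begins_cons.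
by rewrite Ez Eg pcat_cat.
Qed.

Lemma claim2B U al be F p H g f : Filter U ->
  (forall n, gamU U al be F n = mkseq f n) ->
  (forall n, okU U al be F (gamU U al be F n)) ->
  ~ begins_in H (inr g) -> inr f = pcat p (inr g) -> U (Tgt al be F p H).
Proof.
move=> UF Hgam okg Hy [Ef].
have Hm : mkseq f (size p).+1 = rcons p (g 0).
  apply: (@eq_from_nth _ 0); first by rewrite size_mkseq size_rcons.
  move=> i; rewrite size_mkseq => Hi; rewrite nth_mkseq // Ef nth_rcons.
  case: ltnP => // Hi'; have -> : i = size p by lia.
  by rewrite eqxx subnn.
have := okg (size p).+1; rewrite Hgam Hm => Ho.
apply: filterS Ho => t [x [Fx [[z Ez] Et]]].
exists x; split=> //; split=> //; exists (pcat [:: g 0] z); split.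
  by rewrite begins_cons.
by rewrite Ez -cats1 pcat_cat.
Qed.

Lemma ok_notbegins U al be F g : ProperFilter U -> okU U al be F g -> ~ begins_in F (inl g).
Proof.
move=> UP; case: g => [|e g] Ho eF; first by [].
have [t [x [Fx [[z Ez] _]]]] := filter_ex Ho.
by apply: Fx; rewrite Ez; apply/begins_cons.
Qed.

Lemma compact_Zset al be F : compact (Zset ((al, be), F)).
Proof.
rewrite compact_ultra => U UU UK.
have UP : ProperFilter U := @ultra_proper _ _ UU.
have U0 : okU U al be F [::].
  by apply: filterS UK => t [x [Fx ->]]; exists x; split=> //; split=> //; exists x; rewrite pcat_nil.
have okg := ok_gam U0.
suff [L [FL HL]] : exists L, ~ begins_in F L /\
    (forall p H y', ~ begins_in H y' -> L = pcat p y' -> U (Tgt al be F p H)).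
  exists (phi al be L); split; first by exists L.
  move=> A HA; apply: (nbhs_Hamb_ind _ _ _ _ HA).
  - by move=> ? ? AB; apply: filterS AB.
  - exact: filterT.
  - by move=> ? ?; apply: filterI.
  - move=> [[c d] G] HZ.
    have [p [H [[y' [Hy EL]] Hsub]]] := claim1 HZ.
    apply: filterS (HL _ _ _ Hy EL) => t [x [_ [[z [Hz ->]] ->]]].
    exact: Hsub.
have [[n Hn]|HB] := pselect (exists n, ~ exists e, okU U al be F (rcons (gamU U al be F n) e)).
  exists (inl (gamU U al be F n)); split; first exact: ok_notbegins (okg n).
  by move=> p H y' Hy E; apply: claim2A UU (okg n) Hn Hy E.
have HB' : forall n, exists e, okU U al be F (rcons (gamU U al be F n) e).
  by move=> n; apply: contra_notP HB => H; exists n.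
have Hg := gam_mkseq HB'.
set f := (fun k => nth 0 (gamU U al be F k.+1) k) in Hg.
exists (inr f); split.
  have := okg 1; rewrite Hg /= => /filter_ex [t [x [Fx [[z Ez] _]]]] Hf.
  by apply: Fx; rewrite Ez; apply/begins_cons.
move=> p H [r|g] Hy E; first by case: p E.
exact: claim2B _ Hg okg Hy E.
Qed.
Import Order.TTheory GRing.Theory Num.Theory.

Definition ZP (m F : seq nat) (q : path_P) := exists x, ~ begins_in F x /\ q = pcat m x.

Lemma ZP_meet_le m1 F1 m2 F2 p : ZP m1 F1 p -> ZP m2 F2 p -> size m1 <= size m2 ->
  exists m F, ZP m F p /\ (forall q, ZP m F q -> ZP m1 F1 q /\ ZP m2 F2 q).
Proof.
move=> [x1 [F1x1 E1]] [x2 [F2x2 E2]] Hs.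
have [c [Hm2 Hx1]] := pcat_prefix (etrans (esym E1) E2) Hs.
case: c Hm2 Hx1 => [|e c] Hm2 Hx1.
  rewrite cats0 in Hm2; rewrite pcat_nil in Hx1; subst m2 x2.
  exists m1, (F1 ++ F2); split.
    by exists x1; split=> // /begins_cat [].
  move=> q [y [Fy ->]]; split; exists y; split=> // H; apply: Fy; apply/begins_cat; tauto.
exists m2, F2; split; first by exists x2.
move=> q [y [Fy ->]]; split; last by exists y.
exists (pcat (e :: c) y); split; last by rewrite Hm2 pcat_cat.
rewrite begins_cons => eF; apply: F1x1; rewrite Hx1; exact/begins_cons.
Qed.

Lemma ZP_meet m1 F1 m2 F2 p : ZP m1 F1 p -> ZP m2 F2 p ->
  exists m F, ZP m F p /\ (forall q, ZP m F q -> ZP m1 F1 q /\ ZP m2 F2 q).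
Proof.
move=> H1 H2; case: (leqP (size m1) (size m2)) => Hs.
  exact: ZP_meet_le.
have [m [F [HZ Hq]]] := ZP_meet_le H2 H1 (ltnW Hs).
exists m, F; split=> // q /Hq []; tauto.
Qed.

Lemma nbhs_diag (p : path_P) (A : set Hamb) : nbhs ((p, 0%R, p) : Hamb) A ->
  exists m F, ZP m F p /\ forall q, ZP m F q -> A ((q, 0%R, q) : Hamb).
Proof.
move=> HA.
apply: (@nbhs_Hamb_ind _ (fun A => exists m F, ZP m F p /\
  forall q, ZP m F q -> A ((q, 0%R, q) : Hamb)) _ _ _ _ A HA).
- move=> B C BC [m [F [H1 H2]]]; exists m, F; split=> // q /H2; exact: BC.
- exists [::], [::]; split=> //; exists p; split; [exact: begins_nil | by rewrite pcat_nil].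
- move=> B C [m1 [F1 [H1 H1']]] [m2 [F2 [H2 H2']]].
  have [m [F [HZ Hq]]] := ZP_meet H1 H2.
  exists m, F; split=> // q /Hq [/H1' ? /H2' ?]; by split.
- move=> [[c d] G] [x [Gx E]]; case: E => E1 Ek E2.
  have [Hcd _] : c = d /\ x = x.
    apply: pcat_same; first by rewrite -E1 -E2.
    lia.
  subst d; exists c, G; split; first by exists x.
  move=> q [y [Gy ->]]; exists y; split=> //=; by rewrite subrr.
Qed.

Lemma ZsetH i : Zset i `<=` Hset.
Proof. by move=> t [x [_ ->]]; exists i.1.1, i.1.2, x. Qed.

Section Aut.
Context (T : topologicalType) (G : gpd T) (a ai : T -> T).
Hypothesis Hg : is_groupoid G.
Hypothesis Ha : automorphism G a ai.

Lemma ai_arr g : arr G g -> arr G (ai g).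
Proof. by case: Ha => A1 _ _ _ _ /A1 []. Qed.
Lemma a_arr g : arr G g -> arr G (a g).
Proof. by case: Ha => A1 _ _ _ _ /A1 []. Qed.
Lemma a_ai g : arr G g -> a (ai g) = g.
Proof. by case: Ha => A1 _ _ _ _ /A1 []. Qed.
Lemma ai_a g : arr G g -> ai (a g) = g.
Proof. by case: Ha => A1 _ _ _ _ /A1 []. Qed.

Lemma iter_ai_arr k g : arr G g -> arr G (iter k ai g).
Proof. by elim: k => [|k IH] //= /IH /ai_arr. Qed.
Lemma iter_a_arr k g : arr G g -> arr G (iter k a g).
Proof. by elim: k => [|k IH] //= /IH /a_arr. Qed.

Lemma iter_a_ai k g : arr G g -> iter k a (iter k ai g) = g.
Proof.
elim: k g => [|k IH] g Hg' //=.
by rewrite -iterS iterSr a_ai ?IH //; apply: iter_ai_arr.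
Qed.

Lemma rg_ai g : arr G g -> rg G (ai g) = ai (rg G g).
Proof.
move=> Hgg; case: Ha => _ _ _ A4 _.
have [H1 _] := A4 _ (ai_arr Hgg); rewrite a_ai // in H1.
case: Hg => G1 _.
by rewrite H1 ai_a //; case: (G1 _ (ai_arr Hgg)).
Qed.

Lemma sc_ai g : arr G g -> sc G (ai g) = ai (sc G g).
Proof.
move=> Hgg; case: Ha => _ _ _ A4 _.
have [_ H1 _] := A4 _ (ai_arr Hgg); rewrite a_ai // in H1.
case: Hg => G1 _.
by rewrite H1 ai_a //; case: (G1 _ (ai_arr Hgg)).
Qed.

Lemma rg_iter k g : arr G g -> rg G (iter k ai g) = iter k ai (rg G g).
Proof. by elim: k => [|k IH] //= Hgg; rewrite rg_ai ?(IH Hgg) //; apply: iter_ai_arr. Qed.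
Lemma sc_iter k g : arr G g -> sc G (iter k ai g) = iter k ai (sc G g).
Proof. by elim: k => [|k IH] //= Hgg; rewrite sc_ai ?(IH Hgg) //; apply: iter_ai_arr. Qed.

Lemma unit_prop v : units G v -> [/\ arr G v, rg G v = v & sc G v = v].
Proof.
case=> g Hgg <-; case: Hg => G1 [G2 _].
by have [? ? ?] := G1 _ Hgg; have [? ? ? ?] := G2 _ Hgg.
Qed.

Lemma iterV (V : set T) : compact V -> open_in (arr G) V -> V `<=` arr G ->
  forall k, [/\ compact (iter k ai @` V), open_in (arr G) (iter k ai @` V)
             & iter k ai @` V `<=` arr G].
Proof.
move=> cV oV sV; case: Ha => _ Ca Cai _ _.
elim=> [|k [IHc IHo IHs]].
  have -> : iter 0 ai @` V = V.
    by apply/seteqP; split=> [_ [x Vx <-]|x Vx] //; exists x.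
  by split.
have E : iter k.+1 ai @` V = ai @` (iter k ai @` V).
  apply/seteqP; split=> [_ [x Vx <-]|_ [_ [x Vx <-] <-]].
    by exists (iter k ai x) => //; exists x.
  by exists x.
rewrite E; split.
- apply: continuous_compact => //; exact: continuous_subspaceW IHs Cai.
- case: IHo => O' [oO' EO].
  have -> : ai @` (iter k ai @` V) = a @^-1` O' `&` arr G.
    apply/seteqP; split.
      move=> _ [s Hs <-]; have As := IHs _ Hs; split; last exact: ai_arr.
      have : (O' `&` arr G) s by rewrite -EO.
      by case=> Os _; rewrite /= a_ai.
    move=> g [/= Og Ag]; exists (a g); last by rewrite ai_a.
    have : (O' `&` arr G) (a g) by split=> //; exact: a_arr.
    by rewrite -EO.
  exact: preim_open_in.
- by move=> _ [s Hs <-]; apply: ai_arr; apply: IHs.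
Qed.

End Aut.

Theorem lemma5p4 (T : topologicalType) (G : gpd T) (a ai : T -> T)
    (BB : set (set T)) :
  lch_etale_groupoid G ->
  automorphism G a ai ->
  ample G ->
  (forall V, BB V -> compact_open_bisection G V /\ V `<=` units G) ->
  (forall W x, open_in (units G) W -> W x ->
     exists V, [/\ BB V, V x & V `<=` W]) ->
  (forall V, BB V ->
     exists l : nat, (1 <= l)%N /\ zpow a ai (- (l%:Z))%R @` V `<=` V) ->
  locally_contracting (Ginf G a ai).
Proof.
move=> [[Hgpd _] _ _ _] Haut _ HBB Hbasis Hcontr W0 [U1 [HU1 EW]] [w Ww].
rewrite EW in Ww; case: Ww => Ow [[h g] [/= Hh Hgarr] Ew].
have Hn : nbhs w U1 by rewrite nbhsE; exists U1.
subst w.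
case: Hn => [[A1 A2] [/= HA1 HA2] HA].
have [m [F [Zp Hm]]] := nbhs_diag HA1.
move: HA2; rewrite nbhsE => -[B2 [oB2 B2u] B2A2].
have Uu : units G (rg G g) by exists g.
have [V [BBV Vu VB]] : exists V, [/\ BB V, V (rg G g) & V `<=` B2 `&` units G].
  by apply: Hbasis; [exists B2; split | split].
have [[cV oV [VA _]] Vunits] := HBB V BBV.
have [l [Hl HlV]] := Hcontr V BBV.
case: l Hl HlV => [|k] Hl HlV; first by [].
have Hz : zpow a ai (- (k.+1%:Z))%R = iter k.+1 ai by rewrite -NegzE.
rewrite Hz in HlV.
suff : exists B, [/\ compact_open_bisection (Ginf G a ai) B,
   rg (Ginf G a ai) @` B `<` sc (Ginf G a ai) @` B & sc (Ginf G a ai) @` B `<=` W0] by [].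
set l := k.+1.
set e := (sumn F).+1.
have eF : e \notin F by apply: notin_sumn.
set nu := nseq l e.
have nuE : nu = e :: nseq k e by [].
set Vl := iter l ai @` V.
have [cVl oVl sVl] := iterV Haut cV oV VA l.
have HVl : forall v, V v -> V (iter l ai v) by move=> v Vv; apply: HlV; exists v.
have Hc : ((size (m ++ nu))%:Z - (size m)%:Z = l%:Z)%R.
  by rewrite size_cat size_nseq; lia.
have scB : forall x v, V v -> sc (Ginf G a ai) (phi (m ++ nu) m x, iter l ai v)
   = ((pcat m x, 0%R, pcat m x), v).
  move=> x v Vv; rewrite /= /cocycle /= Hc /=.
  have [Av _ Sv] := unit_prop Hgpd (Vunits _ Vv).
  congr (_, _); change (iter l a (sc G (iter l ai v)) = v).
  by rewrite (sc_iter Hgpd Haut) // Sv (iter_a_ai Haut).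
have rgB : forall x v, V v -> rg (Ginf G a ai) (phi (m ++ nu) m x, iter l ai v)
   = ((pcat (m ++ nu) x, 0%R, pcat (m ++ nu) x), iter l ai v).
  move=> x v Vv; rewrite /=.
  have [Av Rv _] := unit_prop Hgpd (Vunits _ Vv).
  congr (_, _); change (rg G (iter l ai v) = iter l ai v).
  by rewrite (rg_iter Hgpd Haut) // Rv.
set B := Zset ((m ++ nu, m), F) `*` Vl.
have memB : forall t, B t -> exists x v, [/\ ~ begins_in F x, V v &
    t = (phi (m ++ nu) m x, iter l ai v)].
  by move=> [t1 t2] [/= [x [Fx ->]] [v Vv <-]]; exists x, v.
have inB : forall x v, ~ begins_in F x -> V v -> B (phi (m ++ nu) m x, iter l ai v).
  by move=> x v Fx Vv; split; [exists x | exists v].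
exists B; split.
- split.
  + by rewrite /B; apply: compact_setX; [exact: compact_Zset | exact: cVl].
  + case: oVl => U2 [oU2 E2].
    exists (Zset ((m ++ nu, m), F) `*` U2); split; first exact: open_setX' (open_Zset _) oU2.
    apply/seteqP; split.
      move=> [t1 t2] [/= Z1 V2].
      have : (U2 `&` arr G) t2 by rewrite -E2.
      by case=> ? ?; split; split => //; exact: ZsetH Z1.
    move=> [t1 t2] [[/= Z1 U2t] [_ At]]; split => //.
    have : (U2 `&` arr G) t2 by [].
    by rewrite -E2.
  + split.
      move=> t /memB [x [v [Fx Vv ->]]]; split.
        by exists (m ++ nu), m, x.
      by apply: (iter_ai_arr Haut); apply: VA.
    split.
      move=> t t' /memB [x [v [Fx Vv ->]]] /memB [x' [v' [Fx' Vv' ->]]].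
      rewrite !rgB // => E.
      have E1 : pcat (m ++ nu) x = pcat (m ++ nu) x' := congr1 (fun t => t.1.1.1) E.
      have E2 : iter l ai v = iter l ai v' := congr1 snd E.
      by rewrite E2 (pcat_inj E1).
    move=> t t' /memB [x [v [Fx Vv ->]]] /memB [x' [v' [Fx' Vv' ->]]].
    rewrite !scB // => E.
    have E1 : pcat m x = pcat m x' := congr1 (fun t => t.1.1.1) E.
    have E2 : v = v' := congr1 snd E.
    by rewrite E2 (pcat_inj E1).
- split.
    move=> _ [t /memB [x [v [Fx Vv ->]]] <-]; rewrite rgB //.
    exists (phi (m ++ nu) m (pcat nu x), iter l ai (iter l ai v)).
      apply: inB; last exact: HVl.
      by rewrite nuE begins_cons; apply/negP.
    by rewrite scB ?(pcat_cat m nu x) //; apply: HVl.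
  move=> Hsub.
  have : (sc (Ginf G a ai) @` B) (sc (Ginf G a ai) (phi (m ++ nu) m (inl [::]), iter l ai (rg G g))).
    by exists (phi (m ++ nu) m (inl [::]), iter l ai (rg G g)) => //; apply: inB.
  move/Hsub; rewrite scB // => -[t /memB [x [v [Fx Vv ->]]]].
  rewrite rgB // => E.
  have E1 : pcat (m ++ nu) x = pcat m (inl [::]) := congr1 (fun t => t.1.1.1) E.
  move: E1; rewrite pcat_cat => /pcat_inj; rewrite nuE.
  by case: x {E Fx}.
move=> _ [t /memB [x [v [Fx Vv ->]]] <-]; rewrite scB // EW; split.
  apply: HA; split => /=.
    by apply: Hm; exists x.
  by apply: B2A2; have [] := VB _ Vv.
have [Av Rv _] := unit_prop Hgpd (Vunits _ Vv).
exists ((pcat m x, 0%R, pcat m x), v).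
  split => //=; exists [::], [::], (pcat m x); by rewrite pcat_nil subrr.
by rewrite /= Rv.
Qed.
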